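(* Let $\xi,\eta\in\mathbb R^3$ and suppose that the triangle formed by $\xi,\xi-\eta,\eta$ is non-degenerate in the sense that one of its three corner angles lies in $[2^{-5},\pi-2^{-5}]$, and that $|\Lambda(\zeta)|\ge2^{-5}$ for some $\zeta\in\{\xi,\xi-\eta,\eta\}$. Then $$|\bar\sigma|\sim\min\{|\xi|,|\xi-\eta|,|\eta|\}\cdot\max\{|\xi|,|\xi-\eta|,|\eta|\},$$ with absolute implicit constants.
   Context: $\Lambda(\zeta)=\zeta_3/|\zeta|$. $\bar\sigma=\xi_3\eta_h-\eta_3\xi_h\in\mathbb R^2$, where $\xi=(\xi_h,\xi_3)$, $\eta=(\eta_h,\eta_3)$. $A\sim B$ means $c^{-1}B\le A\le cB$ for an absolute constant $c$. *)

(* Defs.v *)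
From HB Require Import structures.
From mathcomp Require Import all_boot all_order all_algebra.
From mathcomp Require Import all_classical all_reals all_analysis.
Set Implicit Arguments. Unset Strict Implicit. Unset Printing Implicit Defensive.
Import Order.TTheory GRing.Theory Num.Theory.
Local Open Scope ring_scope.

Section Defs.
Variable R : realType.

Definition dot3 (u v : 'rV[R]_3) : R := \sum_(i < 3) u ord0 i * v ord0 i.
Definition norm3 (u : 'rV[R]_3) : R := Num.sqrt (dot3 u u).

Definition c1 (u : 'rV[R]_3) : R := u ord0 0.
Definition c2 (u : 'rV[R]_3) : R := u ord0 1.
Definition c3 (u : 'rV[R]_3) : R := u ord0 2.

Definition Lambda (z : 'rV[R]_3) : R := c3 z / norm3 z.

(* |sigma_bar| for sigma_bar = xi_3 eta_h - eta_3 xi_h in R^2 *)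
Definition sigma_bar_norm (xi eta : 'rV[R]_3) : R :=
  Num.sqrt ((c3 xi * c1 eta - c3 eta * c1 xi) ^+ 2 +
            (c3 xi * c2 eta - c3 eta * c2 xi) ^+ 2).

Definition angle3 (u v : 'rV[R]_3) : R := acos (dot3 u v / (norm3 u * norm3 v)).

Definition good_angle (a : R) (u v : 'rV[R]_3) : Prop :=
  u != 0 /\ v != 0 /\ a <= angle3 u v <= pi - a.

(* Corner angles: at 0 between xi and eta;
   at xi between -xi and eta - xi; at eta between -eta and xi - eta. *)
Definition triangle_nondeg (a : R) (xi eta : 'rV[R]_3) : Prop :=
  good_angle a xi eta \/ good_angle a (- xi) (eta - xi) \/
  good_angle a (- eta) (xi - eta).
End Defs.

(* Main.v *)
Require Import Defs.
From HB Require Import structures.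
From mathcomp Require Import all_boot all_order all_algebra.
From mathcomp Require Import all_classical all_reals all_analysis.
From mathcomp Require Import lra ring.
Import Order.TTheory GRing.Theory Num.Theory.
Local Open Scope ring_scope.
Section S2.
Variable R : rcfType.

Lemma min3 (a b e : R) : let m := Num.min a (Num.min b e) in
  (m = a \/ m = b \/ m = e) /\ m <= a /\ m <= b /\ m <= e.
Proof.
move=> m; split; last by (do !split); rewrite /m ?ge_min ?lexx ?orbT.
rewrite /m !minEle; case: (a <= _)%O; case: (b <= e)%O; tauto.
Qed.

Lemma max3 (a b e : R) : let M := Num.max a (Num.max b e) in
  (M = a \/ M = b \/ M = e) /\ a <= M /\ b <= M /\ e <= M.
Proof.
move=> M; split; last by (do !split); rewrite /M ?le_max ?lexx ?orbT.
rewrite /M !maxEle; case: (a <= _)%O; case: (b <= e)%O; tauto.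
Qed.

Lemma le_sqrt_of (y P : R) : 0 <= y -> y ^+ 2 <= P -> y <= Num.sqrt P.
Proof. by move=> y0 h; rewrite -(ger0_norm y0) -sqrtr_sqr; exact: ler_wsqrtr. Qed.

Lemma sqrt_le_of (y P : R) : 0 <= y -> P <= y ^+ 2 -> Num.sqrt P <= y.
Proof. by move=> y0 h; rewrite -(ger0_norm y0) -sqrtr_sqr; exact: ler_wsqrtr. Qed.

Lemma final (a b e P C s : R) : 0 <= a -> 0 <= b -> 0 <= e ->
  a <= b + e -> b <= a + e -> e <= a + b -> 0 < s -> s <= 1 ->
  0 <= P -> C ^+ 2 <= 1024 * P ->
  (s ^+ 2 * (a * e) ^+ 2 <= P + C ^+ 2 \/ s ^+ 2 * (a * b) ^+ 2 <= P + C ^+ 2 \/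
   s ^+ 2 * (b * e) ^+ 2 <= P + C ^+ 2) ->
  P + C ^+ 2 <= (a * e) ^+ 2 -> P + C ^+ 2 <= (a * b) ^+ 2 -> P + C ^+ 2 <= (b * e) ^+ 2 ->
  let m := Num.min a (Num.min b e) in
  let M := Num.max a (Num.max b e) in
  (128 / s)^-1 * (m * M) <= Num.sqrt P <= 128 / s * (m * M).
Proof.
move=> a0 b0 e0 t1 t2 t3 s0 s1 P0 hC hL hae hab hbe /=.
set m := Num.min a _; set M := Num.max a _.
have [hm [ma [mb me]]] := min3 a b e; have [hM [aM [bM eM]]] := max3 a b e.
rewrite -/m -/M in hm ma mb me hM aM bM eM.
have m0 : 0 <= m by case: hm => [->|[->|->]].
have M0 : 0 <= M by lra.
have mM0 : 0 <= m * M by rewrite mulr_ge0.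
have up : a * e <= m * M \/ a * b <= m * M \/ b * e <= m * M.
  clear -hm hM ma mb me aM bM eM a0 b0 e0.
  case: hm => [h1|[h1|h1]]; case: hM => [h2|[h2|h2]]; rewrite h1 h2 in ma mb me aM bM eM *; nra.
have lo : m * M <= 2 * (a * e) /\ m * M <= 2 * (a * b) /\ m * M <= 2 * (b * e).
  clear -hm hM ma mb me aM bM eM a0 b0 e0 t1 t2 t3.
  case: hm => [h1|[h1|h1]]; case: hM => [h2|[h2|h2]]; rewrite h1 h2 in ma mb me aM bM eM *; (do !split); nra.
have sq : forall x y : R, 0 <= x -> x <= y -> x ^+ 2 <= y ^+ 2 by move=> x y ? ?; nra.
have hK : P + C ^+ 2 <= (m * M) ^+ 2.
  case: up => [h|[h|h]].
  - apply: le_trans hae _; apply: sq => //; exact: mulr_ge0.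
  - apply: le_trans hab _; apply: sq => //; exact: mulr_ge0.
  - apply: le_trans hbe _; apply: sq => //; exact: mulr_ge0.
have c1 : 1 <= 128 / s.
  rewrite ler_pdivlMr //; lra.
apply/andP; split.
  apply: le_sqrt_of; first by rewrite mulr_ge0 // invr_ge0 divr_ge0 // ltW.
  rewrite invf_div exprMn.
  have hQ : (m * M) ^+ 2 <= 4 * (a * e) ^+ 2 /\ (m * M) ^+ 2 <= 4 * (a * b) ^+ 2 /\
            (m * M) ^+ 2 <= 4 * (b * e) ^+ 2.
    case: lo => [l1 [l2 l3]]; split; [|split].
    - have := sq _ _ mM0 l1; rewrite exprMn; lra.
    - have := sq _ _ mM0 l2; rewrite exprMn; lra.
    - have := sq _ _ mM0 l3; rewrite exprMn; lra.
  have S0 : 0 <= s ^+ 2 by rewrite sqr_ge0.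
  have hSQ : s ^+ 2 * (m * M) ^+ 2 <= 4 * (P + C ^+ 2).
    case: hQ => [q1 [q2 q3]]; case: hL => [h|[h|h]].
    - have := ler_wpM2l S0 q1; clear -h; lra.
    - have := ler_wpM2l S0 q2; clear -h; lra.
    - have := ler_wpM2l S0 q3; clear -h; lra.
  have -> : (s / 128) ^+ 2 * (m * M) ^+ 2 = s ^+ 2 * (m * M) ^+ 2 / 16384.
    by rewrite expr_div_n; field.
  have h16 : (0:R) < 16384 by lra.
  rewrite (ler_pdivrMr _ _ h16); apply: le_trans hSQ _; clear -hC P0; lra.
apply: sqrt_le_of; first by rewrite mulr_ge0 // divr_ge0 // ltW.
apply: le_trans (_ : P + C ^+ 2 <= _); first by rewrite lerDl sqr_ge0.
apply: le_trans hK _; apply: sq => //.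
by rewrite -{1}(mul1r (m * M)) ler_wpM2r.
Qed.
End S2.

Section S.
Variable R : realType.
Implicit Types u v : 'rV[R]_3.

Lemma dot3E u v : dot3 u v = c1 u * c1 v + c2 u * c2 v + c3 u * c3 v.
Proof. rewrite /dot3 !big_ord_recr big_ord0 /= add0r /c1 /c2 /c3.
by congr (_ * _ + _ * _ + _ * _); congr (_ _ _); apply: val_inj. Qed.

Lemma c1N u : c1 (- u) = - c1 u. Proof. by rewrite /c1 mxE. Qed.
Lemma c2N u : c2 (- u) = - c2 u. Proof. by rewrite /c2 mxE. Qed.
Lemma c3N u : c3 (- u) = - c3 u. Proof. by rewrite /c3 mxE. Qed.
Lemma c1B u v : c1 (u - v) = c1 u - c1 v. Proof. by rewrite /c1 !mxE. Qed.
Lemma c2B u v : c2 (u - v) = c2 u - c2 v. Proof. by rewrite /c2 !mxE. Qed.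
Lemma c3B u v : c3 (u - v) = c3 u - c3 v. Proof. by rewrite /c3 !mxE. Qed.

Lemma dot3_gt0 u : u != 0 -> 0 < dot3 u u.
Proof.
move=> nz; rewrite dot3E lt_def; apply/andP; split; last by
  rewrite addr_ge0 ?mulr_ge0' // ?addr_ge0 // -expr2 sqr_ge0.
apply: contra nz => /eqP h.
have h1 : c1 u = 0 by apply/eqP; rewrite -sqrf_eq0; apply/eqP; nra.
have h2 : c2 u = 0 by apply/eqP; rewrite -sqrf_eq0; apply/eqP; nra.
have h3 : c3 u = 0 by apply/eqP; rewrite -sqrf_eq0; apply/eqP; nra.
apply/eqP/rowP => i; rewrite mxE.
case: i => [[|[|[|//]]]] Hi.
- by rewrite -h1 /c1; congr (u _ _); apply: val_inj.
- by rewrite -h2 /c2; congr (u _ _); apply: val_inj.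
- by rewrite -h3 /c3; congr (u _ _); apply: val_inj.
Qed.
Definition eps : R := 2^-5.
Lemma epsE : eps = 1/32.
Proof. rewrite /eps. have -> : (2:R)^+5 = 32 by rewrite !exprS expr0; lra. by rewrite div1r. Qed.

Lemma eps_pi : 0 < eps < pi.
Proof. have := pi_ge2 R; rewrite epsE; lra. Qed.

Lemma cs u v : dot3 u v ^+ 2 <= dot3 u u * dot3 v v.
Proof.
rewrite !dot3E -subr_ge0.
have -> : (c1 u * c1 u + c2 u * c2 u + c3 u * c3 u) * (c1 v * c1 v + c2 v * c2 v + c3 v * c3 v) -
  (c1 u * c1 v + c2 u * c2 v + c3 u * c3 v) ^+ 2 =
  (c1 u * c2 v - c2 u * c1 v)^+2 + (c1 u * c3 v - c3 u * c1 v)^+2 + (c2 u * c3 v - c3 u * c2 v)^+2 by ring.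
by rewrite !addr_ge0 ?sqr_ge0.
Qed.

Lemma angle_bound u v : good_angle eps u v ->
  sin eps ^+ 2 * (dot3 u u * dot3 v v) <= dot3 u u * dot3 v v - dot3 u v ^+ 2.
Proof.
move=> [nu [nv /andP[h1 h2]]].
have pu := dot3_gt0 _ nu; have pv := dot3_gt0 _ nv.
move: h1 h2; rewrite /angle3 /norm3.
set p2 := dot3 u u; set q2 := dot3 v v; set d := dot3 u v.
have hcs : d ^+ 2 <= p2 * q2 by exact: cs.
set p := Num.sqrt p2; set q := Num.sqrt q2.
have pp : 0 < p by rewrite sqrtr_gt0.
have qp : 0 < q by rewrite sqrtr_gt0.
have ep : p ^+ 2 = p2 by rewrite sqr_sqrtr // ltW.
have eq : q ^+ 2 = q2 by rewrite sqr_sqrtr // ltW.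
set t := d / (p * q).
have pq0 : p * q != 0 by rewrite mulf_neq0 // gt_eqF.
have dt : d = t * (p * q) by rewrite /t divfK.
clearbody t.
have t2 : t ^+ 2 <= 1.
  have : (t * (p * q)) ^+ 2 <= 1 * (p * q) ^+ 2.
    by rewrite -dt mul1r exprMn ep eq.
  by rewrite exprMn ler_pM2r // exprn_gt0 // mulr_gt0.
have tI : -1 <= t <= 1 by apply/andP; split; nra.
have [/andP[a0 api] ca] := acos_def tI.
set phi := acos t in a0 api ca *.
move=> h1 h2.
have [e0 epi] := andP eps_pi.
have c1' : t <= cos eps.
  rewrite -ca leNgt ltr_cos ?in_itv /= ?a0 ?api ?(ltW e0) ?(ltW epi) //.
  by rewrite -leNgt.
have c2' : - t <= cos eps.
  have -> : - t = cos (pi - phi) by rewrite cosB cospi sinpi -ca; ring.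
  rewrite leNgt ltr_cos ?in_itv /= ?(ltW e0) ?(ltW epi) //; last first.
    by apply/andP; split; lra.
  by rewrite -leNgt; lra.
have hc : t ^+ 2 <= cos eps ^+ 2 by nra.
have hs := sin2cos2 eps.
rewrite dt !exprMn ep eq.
have H : 0 <= (cos eps ^+ 2 - t ^+ 2) * (p2 * q2).
  by rewrite mulr_ge0 // ?subr_ge0 // ltW // mulr_gt0.
rewrite hs; move: H; rewrite mulrBl; lra.
Qed.

Lemma c1D u v : c1 (u + v) = c1 u + c1 v. Proof. by rewrite /c1 !mxE. Qed.
Lemma c2D u v : c2 (u + v) = c2 u + c2 v. Proof. by rewrite /c2 !mxE. Qed.
Lemma c3D u v : c3 (u + v) = c3 u + c3 v. Proof. by rewrite /c3 !mxE. Qed.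

Lemma dot3_ge0 u : 0 <= dot3 u u.
Proof. by rewrite dot3E -!expr2 !addr_ge0 ?sqr_ge0. Qed.

Lemma norm3_sq u : norm3 u ^+ 2 = dot3 u u.
Proof. by rewrite /norm3 sqr_sqrtr // dot3_ge0. Qed.

Lemma norm3_ge0 u : 0 <= norm3 u.
Proof. exact: sqrtr_ge0. Qed.

Lemma norm3N u : norm3 (- u) = norm3 u.
Proof. by rewrite /norm3 !dot3E !c1N !c2N !c3N !mulrNN. Qed.

Lemma tri u v : norm3 (u + v) <= norm3 u + norm3 v.
Proof.
have hcs := cs u v.
have p0 := norm3_ge0 u; have q0 := norm3_ge0 v.
have ep := norm3_sq u; have eq := norm3_sq v.
have hd : dot3 u v <= norm3 u * norm3 v.
  have : dot3 u v ^+ 2 <= (norm3 u * norm3 v) ^+ 2 by rewrite exprMn ep eq.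
  have : 0 <= norm3 u * norm3 v by rewrite mulr_ge0.
  move: (norm3 u * norm3 v) => r r0 h; nra.
rewrite {1}/norm3; apply: sqrt_le_of; first by rewrite addr_ge0.
have -> : dot3 (u + v) (u + v) = dot3 u u + 2 * dot3 u v + dot3 v v.
  by rewrite !dot3E !c1D !c2D !c3D; ring.
rewrite -ep -eq; nra.
Qed.

Lemma sq_le (x y : R) : 0 <= x -> x <= y -> x ^+ 2 <= y ^+ 2.
Proof. by move=> x0 xy; rewrite ler_pXn2r // ?nnegrE // (le_trans x0). Qed.

Lemma lam_real (z1 z2 z3 A B C n : R) : z1 * B - z2 * A = z3 * C -> 0 < n ->
  n ^+ 2 = z1 * z1 + z2 * z2 + z3 * z3 -> eps * n <= `|z3| ->
  C ^+ 2 <= 1024 * (A ^+ 2 + B ^+ 2).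
Proof.
move=> hz n0 hn hl.
have h1 : (eps * n) ^+ 2 <= z3 ^+ 2.
  rewrite -(real_normK (num_real z3)); apply: sq_le => //.
  by rewrite mulr_ge0 // ?ltW // epsE.
have h2 : (z1 * B - z2 * A) ^+ 2 <= (z1 ^+ 2 + z2 ^+ 2) * (A ^+ 2 + B ^+ 2).
  rewrite -subr_ge0.
  have -> : (z1 ^+ 2 + z2 ^+ 2) * (A ^+ 2 + B ^+ 2) - (z1 * B - z2 * A) ^+ 2 =
    (z1 * A + z2 * B) ^+ 2 by ring.
  exact: sqr_ge0.
rewrite hz exprMn in h2.
have h3 : z1 ^+ 2 + z2 ^+ 2 <= n ^+ 2.
  rewrite hn -!expr2 lerDl; exact: sqr_ge0.
have AB0 : 0 <= A ^+ 2 + B ^+ 2 by rewrite addr_ge0 ?sqr_ge0.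
have h4 := ler_wpM2r AB0 h3.
have C0 : 0 <= C ^+ 2 by rewrite sqr_ge0.
have h5 := ler_wpM2r C0 h1.
rewrite epsE exprMn in h5.
have n2 : 0 < n ^+ 2 by rewrite exprn_gt0.
have h6 : n ^+ 2 * C ^+ 2 <= n ^+ 2 * (1024 * (A ^+ 2 + B ^+ 2)).
  have -> : n ^+ 2 * C ^+ 2 = 1024 * ((1 / 32) ^+ 2 * n ^+ 2 * C ^+ 2) by field.
  have -> : n ^+ 2 * (1024 * (A ^+ 2 + B ^+ 2)) = 1024 * (n ^+ 2 * (A ^+ 2 + B ^+ 2)) by ring.
  have h1024 : (0:R) < 1024 by lra.
  rewrite (ler_pM2l h1024); apply: le_trans h5 _; exact: le_trans h2 h4.
by rewrite (ler_pM2l n2) in h6.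
Qed.

Lemma lam_bound xi eta z : z \in [:: xi; xi - eta; eta] -> eps <= `|Lambda z| ->
  (c1 xi * c2 eta - c2 xi * c1 eta) ^+ 2 <=
  1024 * ((c3 xi * c1 eta - c3 eta * c1 xi) ^+ 2 + (c3 xi * c2 eta - c3 eta * c2 xi) ^+ 2).
Proof.
move=> hz hl.
have [n0|npos] := eqVneq (norm3 z) 0.
  by move: hl; rewrite /Lambda n0 invr0 mulr0 normr0 epsE; lra.
have np : 0 < norm3 z by rewrite lt_def npos norm3_ge0.
have hl' : eps * norm3 z <= `|c3 z|.
  by move: hl; rewrite /Lambda normrM normfV (ger0_norm (ltW np)) ler_pdivlMr.
have hn : norm3 z ^+ 2 = c1 z * c1 z + c2 z * c2 z + c3 z * c3 z by rewrite norm3_sq dot3E.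
apply: (lam_real _ _ _ _ _ _ _ _ np hn hl').
move: hz; rewrite !inE => /or3P [] /eqP ->; rewrite ?c1B ?c2B ?c3B; ring.
Qed.

Lemma main_aux :
  exists c : R, 1 <= c /\
  forall xi eta : 'rV[R]_3,
    triangle_nondeg (2^-5) xi eta ->
    (exists2 zeta, zeta \in [:: xi; xi - eta; eta] & 2^-5 <= `|Lambda zeta|) ->
    let m := Num.min (norm3 xi) (Num.min (norm3 (xi - eta)) (norm3 eta)) in
    let M := Num.max (norm3 xi) (Num.max (norm3 (xi - eta)) (norm3 eta)) in
    c^-1 * (m * M) <= sigma_bar_norm xi eta <= c * (m * M).
Proof.
have s0 : 0 < sin eps := sin_gt0_pi eps_pi.
have s1 := sin_le1 eps.
exists (128 / sin eps); split.
  by rewrite ler_pdivlMr // mul1r; lra.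
move=> xi eta Htri [z hz hl].
have hC := lam_bound _ _ _ hz hl.
rewrite /sigma_bar_norm.
set A := c3 xi * c1 eta - c3 eta * c1 xi in hC *.
set B := c3 xi * c2 eta - c3 eta * c2 xi in hC *.
set C := c1 xi * c2 eta - c2 xi * c1 eta in hC *.
have P0 : 0 <= A ^+ 2 + B ^+ 2 by rewrite addr_ge0 ?sqr_ge0.
have hae : A ^+ 2 + B ^+ 2 + C ^+ 2 <= (norm3 xi * norm3 eta) ^+ 2.
  rewrite -subr_ge0.
  have -> : (norm3 xi * norm3 eta) ^+ 2 - (A ^+ 2 + B ^+ 2 + C ^+ 2) = dot3 xi eta ^+ 2.
    by rewrite exprMn !norm3_sq !dot3E /A /B /C; ring.
  exact: sqr_ge0.
have hab : A ^+ 2 + B ^+ 2 + C ^+ 2 <= (norm3 xi * norm3 (xi - eta)) ^+ 2.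
  rewrite -subr_ge0.
  have -> : (norm3 xi * norm3 (xi - eta)) ^+ 2 - (A ^+ 2 + B ^+ 2 + C ^+ 2) =
     dot3 xi (xi - eta) ^+ 2.
    by rewrite exprMn !norm3_sq !dot3E !c1B !c2B !c3B /A /B /C; ring.
  exact: sqr_ge0.
have hbe : A ^+ 2 + B ^+ 2 + C ^+ 2 <= (norm3 (xi - eta) * norm3 eta) ^+ 2.
  rewrite -subr_ge0.
  have -> : (norm3 (xi - eta) * norm3 eta) ^+ 2 - (A ^+ 2 + B ^+ 2 + C ^+ 2) =
     dot3 (xi - eta) eta ^+ 2.
    by rewrite exprMn !norm3_sq !dot3E !c1B !c2B !c3B /A /B /C; ring.
  exact: sqr_ge0.
have hL : sin eps ^+ 2 * (norm3 xi * norm3 eta) ^+ 2 <= A ^+ 2 + B ^+ 2 + C ^+ 2 \/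
          sin eps ^+ 2 * (norm3 xi * norm3 (xi - eta)) ^+ 2 <= A ^+ 2 + B ^+ 2 + C ^+ 2 \/
          sin eps ^+ 2 * (norm3 (xi - eta) * norm3 eta) ^+ 2 <= A ^+ 2 + B ^+ 2 + C ^+ 2.
  case: Htri => [h|[h|h]]; have := angle_bound _ _ h.
  - have E1 : dot3 xi xi * dot3 eta eta = (norm3 xi * norm3 eta) ^+ 2.
      by rewrite exprMn !norm3_sq.
    have E2 : dot3 xi xi * dot3 eta eta - dot3 xi eta ^+ 2 = A ^+ 2 + B ^+ 2 + C ^+ 2.
      by rewrite !dot3E /A /B /C; ring.
    by rewrite E2 E1; left.
  - have E1 : dot3 (- xi) (- xi) * dot3 (eta - xi) (eta - xi) =
        (norm3 xi * norm3 (xi - eta)) ^+ 2.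
      by rewrite exprMn !norm3_sq !dot3E !c1B !c2B !c3B !c1N !c2N !c3N; ring.
    have E2 : dot3 (- xi) (- xi) * dot3 (eta - xi) (eta - xi) -
        dot3 (- xi) (eta - xi) ^+ 2 = A ^+ 2 + B ^+ 2 + C ^+ 2.
      by rewrite !dot3E !c1B !c2B !c3B !c1N !c2N !c3N /A /B /C; ring.
    by rewrite E2 E1; right; left.
  - have E1 : dot3 (- eta) (- eta) * dot3 (xi - eta) (xi - eta) =
        (norm3 (xi - eta) * norm3 eta) ^+ 2.
      by rewrite exprMn !norm3_sq !dot3E !c1B !c2B !c3B !c1N !c2N !c3N; ring.
    have E2 : dot3 (- eta) (- eta) * dot3 (xi - eta) (xi - eta) -
        dot3 (- eta) (xi - eta) ^+ 2 = A ^+ 2 + B ^+ 2 + C ^+ 2.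
      by rewrite !dot3E !c1B !c2B !c3B !c1N !c2N !c3N /A /B /C; ring.
    by rewrite E2 E1; right; right.
have t1 : norm3 xi <= norm3 (xi - eta) + norm3 eta.
  by have := tri (xi - eta) eta; rewrite subrK.
have t2 : norm3 (xi - eta) <= norm3 xi + norm3 eta.
  by have := tri xi (- eta); rewrite norm3N.
have t3 : norm3 eta <= norm3 xi + norm3 (xi - eta).
  by have := tri xi (eta - xi); rewrite [xi + _]addrC subrK -opprB norm3N.
exact: (final _ _ _ _ _ _ _ (norm3_ge0 xi) (norm3_ge0 (xi - eta)) (norm3_ge0 eta)
  t1 t2 t3 s0 s1 P0 hC hL hae hab hbe).
Qed.
End S.

Theorem lemma6p2 (R : realType) :
  exists c : R, 1 <= c /\
  forall xi eta : 'rV[R]_3,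
    triangle_nondeg (2^-5) xi eta ->
    (exists2 zeta, zeta \in [:: xi; xi - eta; eta] & 2^-5 <= `|Lambda zeta|) ->
    let m := Num.min (norm3 xi) (Num.min (norm3 (xi - eta)) (norm3 eta)) in
    let M := Num.max (norm3 xi) (Num.max (norm3 (xi - eta)) (norm3 eta)) in
    c^-1 * (m * M) <= sigma_bar_norm xi eta <= c * (m * M).
Proof. exact: main_aux. Qed.
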